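(* Let $A,B,C$ be positive semidefinite complex matrices of the same order. Then \[ \det(A+B+C)+\det C\ge \det(A+C)+\det(B+C). \] *)

(* Defs.v *)
From HB Require Import structures.
From mathcomp Require Import all_boot all_order all_algebra.
Set Implicit Arguments. Unset Strict Implicit. Unset Printing Implicit Defensive.
Import Order.TTheory GRing.Theory Num.Theory.
Local Open Scope ring_scope.

Definition conjtr (C : numClosedFieldType) m n (A : 'M[C]_(m, n)) : 'M[C]_(n, m) :=
  (map_mx Num.conj A)^T.

Definition psd (C : numClosedFieldType) n (A : 'M[C]_n) : Prop :=
  conjtr A = A /\ forall x : 'cV[C]_n, 0 <= (conjtr x *m A *m x) 0 0.

(* Main.v *)
Require Import Defs.
From HB Require Import structures.
From mathcomp Require Import all_boot all_order all_algebra.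
From mathcomp Require Import ring.
Import Order.TTheory GRing.Theory Num.Theory.
Set Implicit Arguments. Unset Strict Implicit. Unset Printing Implicit Defensive.
Local Open Scope ring_scope.

Lemma det1_rank1 (R : comNzRingType) n (u : 'cV[R]_n) (v : 'rV[R]_n) :
  \det (1%:M + u *m v) = 1 + (v *m u) 0 0.
Proof.
pose M := block_mx (1%:M : 'M[R]_n) u (- v) (1%:M : 'M_1).
have e1 : M = block_mx 1%:M 0 (- v) 1%:M *m block_mx 1%:M u 0 (1%:M + v *m u).
  rewrite mulmx_block !mul1mx !mul0mx ?mulmx0 !addr0 ?add0r mulNmx mulmx1.
  by rewrite ?mulNmx addrCA addNr addr0.
have e2 : M = block_mx (1%:M + u *m v) u 0 1%:M *m block_mx 1%:M 0 (- v) 1%:M.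
  rewrite mulmx_block !mul1mx !mul0mx ?mulmx0 !mulmx1 ?addr0 ?add0r mulmxN.
  by rewrite addrK.
have := congr1 determinant e1; rewrite e2 !det_mulmx !det_lblock !det_ublock !det1 !mulr1 !mul1r => ->.
by rewrite det_mx11 !mxE eqxx.
Qed.

Section Alg.
Variable F : fieldType.
Variable n : nat.
Implicit Types (K : 'M[F]_n) (u : 'cV[F]_n) (v : 'rV[F]_n).

Lemma det_rank1 K u v : K \in unitmx ->
  \det (K + u *m v) = \det K * (1 + (v *m invmx K *m u) 0 0).
Proof.
move=> Ku.
have -> : K + u *m v = K *m (1%:M + (invmx K *m u) *m v).
  by rewrite mulmxDr mulmx1 !mulmxA mulmxV // mul1mx.
by rewrite det_mulmx det1_rank1 mulmxA.
Qed.

Lemma mx11_mulF (A B : 'M[F]_1) : (A *m B) 0 0 = A 0 0 * B 0 0.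
Proof. by rewrite !mxE big_ord1. Qed.

Lemma det_rank2 K u1 v1 u2 v2 : K \in unitmx ->
  1 + (v1 *m invmx K *m u1) 0 0 != 0 ->
  \det (K + u1 *m v1 + u2 *m v2) - \det (K + u1 *m v1) - \det (K + u2 *m v2) + \det K
  = \det K * ((v1 *m invmx K *m u1) 0 0 * (v2 *m invmx K *m u2) 0 0
              - (v1 *m invmx K *m u2) 0 0 * (v2 *m invmx K *m u1) 0 0).
Proof.
move=> Ku a0.
set Ki := invmx K.
set al := (v1 *m Ki *m u1) 0 0.
set c := (1 + al)^-1.
pose Xi := Ki - c *: (Ki *m u1 *m v1 *m Ki).
have XXi : (K + u1 *m v1) *m Xi = 1%:M.
  have hKP : K *m (Ki *m u1 *m v1 *m Ki) = u1 *m v1 *m Ki.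
    by rewrite !mulmxA mulmxV // mul1mx.
  have hUP : u1 *m v1 *m (Ki *m u1 *m v1 *m Ki) = al *: (u1 *m v1 *m Ki).
    have -> : u1 *m v1 *m (Ki *m u1 *m v1 *m Ki) = u1 *m (v1 *m Ki *m u1) *m (v1 *m Ki).
      by rewrite !mulmxA.
    by rewrite [v1 *m Ki *m u1]mx11_scalar -/al mul_mx_scalar -scalemxAl mulmxA.
  have cal : c * al = 1 - c.
    by rewrite /c; field.
  rewrite /Xi mulmxDl !mulmxBr -!scalemxAr hKP hUP mulmxV // scalerA cal.
  by rewrite scalerBl scale1r opprB [u1 *m v1 *m Ki + _]addrCA subrr addr0 subrK.
have dX : \det (K + u1 *m v1) = \det K * (1 + al) by rewrite det_rank1.
have e2 : \det (K + u1 *m v1 + u2 *m v2) = \det (K + u1 *m v1) * (1 + (v2 *m Xi *m u2) 0 0).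
  have -> : K + u1 *m v1 + u2 *m v2 = (K + u1 *m v1) *m (1%:M + (Xi *m u2) *m v2).
    by rewrite mulmxDr mulmx1 !mulmxA XXi mul1mx.
  by rewrite det_mulmx det1_rank1 mulmxA.
have hX : (v2 *m Xi *m u2) 0 0 =
    (v2 *m Ki *m u2) 0 0 - c * ((v2 *m Ki *m u1) 0 0 * (v1 *m Ki *m u2) 0 0).
  have sB (A B : 'M[F]_1) : (A - B) 0 0 = A 0 0 - B 0 0 by rewrite !mxE.
  have sZ (a : F) (A : 'M[F]_1) : (a *: A) 0 0 = a * A 0 0 by rewrite !mxE.
  rewrite /Xi mulmxBr mulmxBl sB -scalemxAr -scalemxAl sZ -mx11_mulF.
  by rewrite !mulmxA.
rewrite e2 dX det_rank1 // hX -/Ki -/al /c.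
by field.
Qed.
End Alg.

Section Herm.
Variable C : numClosedFieldType.

Lemma conjtrK m n (A : 'M[C]_(m, n)) : conjtr (conjtr A) = A.
Proof. by apply/matrixP => i j; rewrite /conjtr !mxE conjCK. Qed.

Lemma conjtrD m n (A B : 'M[C]_(m, n)) : conjtr (A + B) = conjtr A + conjtr B.
Proof. by apply/matrixP => i j; rewrite /conjtr !mxE rmorphD. Qed.

Lemma conjtrN m n (A : 'M[C]_(m, n)) : conjtr (- A) = - conjtr A.
Proof. by apply/matrixP => i j; rewrite /conjtr !mxE rmorphN. Qed.

Lemma conjtrZ m n a (A : 'M[C]_(m, n)) : conjtr (a *: A) = Num.conj a *: conjtr A.
Proof. by apply/matrixP => i j; rewrite /conjtr !mxE rmorphM. Qed.

Lemma conjtrM m n p (A : 'M[C]_(m, n)) (B : 'M[C]_(n, p)) :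
  conjtr (A *m B) = conjtr B *m conjtr A.
Proof.
apply/matrixP => i j; rewrite /conjtr !mxE rmorph_sum; apply: eq_bigr => k _.
by rewrite !mxE rmorphM mulrC.
Qed.

Lemma conjtr_scalar n a : conjtr (a%:M : 'M[C]_n) = (Num.conj a)%:M.
Proof.
by apply/matrixP => i j; rewrite /conjtr !mxE rmorphMn eq_sym.
Qed.

Lemma conjtr11 (A : 'M[C]_1) : conjtr A = (Num.conj (A 0 0))%:M.
Proof. by rewrite {1}[A]mx11_scalar conjtr_scalar. Qed.

Lemma mx11_mul (A B : 'M[C]_1) : (A *m B) 0 0 = A 0 0 * B 0 0.
Proof. by rewrite !mxE big_ord1. Qed.

Definition qf n (Q : 'M[C]_n) (x y : 'cV[C]_n) := (conjtr x *m Q *m y) 0 0.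

Lemma qfDr n (Q : 'M[C]_n) x (y1 y2 : 'cV[C]_n) : qf Q x (y1 + y2) = qf Q x y1 + qf Q x y2.
Proof. by rewrite /qf mulmxDr mxE. Qed.
Lemma qfDl n (Q : 'M[C]_n) (x1 x2 y : 'cV[C]_n) : qf Q (x1 + x2) y = qf Q x1 y + qf Q x2 y.
Proof. by rewrite /qf conjtrD !mulmxDl mxE. Qed.
Lemma qfZr n (Q : 'M[C]_n) a (x y : 'cV[C]_n) : qf Q x (a *: y) = a * qf Q x y.
Proof. by rewrite /qf -scalemxAr mxE. Qed.
Lemma qfZl n (Q : 'M[C]_n) a (x y : 'cV[C]_n) : qf Q (a *: x) y = Num.conj a * qf Q x y.
Proof. by rewrite /qf conjtrZ -!scalemxAl mxE. Qed.
Lemma qfC n (Q : 'M[C]_n) (x y : 'cV[C]_n) : conjtr Q = Q -> qf Q y x = Num.conj (qf Q x y).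
Proof.
move=> hQ; have h := conjtr11 (conjtr x *m Q *m y).
rewrite !conjtrM conjtrK hQ mulmxA in h.
have := congr1 (fun M : 'M[C]_1 => M 0 0) h; rewrite /qf /= => ->.
by rewrite mxE mulr1n.
Qed.

Lemma psd_qf n (Q : 'M[C]_n) x : psd Q -> 0 <= qf Q x x.
Proof. by case=> _ /(_ x). Qed.

Lemma cs_pos n (Q : 'M[C]_n) a b : psd Q -> 0 < qf Q b b ->
  qf Q a b * qf Q b a <= qf Q a a * qf Q b b.
Proof.
move=> pQ bpos; have hQ := pQ.1.
set al := qf Q a a; set be := qf Q b b; set g := qf Q a b; set g' := qf Q b a.
have bec : Num.conj be = be by apply/CrealP; rewrite ger0_real // ltW.
have gc : Num.conj g' = g by rewrite /g' qfC // conjCK.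
have := psd_qf (be *: a - g' *: b) pQ.
have ngc : Num.conj (- g') = - g by rewrite -gc; apply: rmorphN.
rewrite !(qfDl, qfDr) -!scaleNr !(qfZl, qfZr) bec ngc -/al -/be -/g -/g' => H.
have H2 : 0 <= be * (al * be - g * g').
  by apply: (le_trans H); rewrite le_eqVlt; apply/orP; left; apply/eqP; ring.
by move: H2; rewrite pmulr_rge0 // subr_ge0.
Qed.
End Herm.

Section Psd.
Variable C : numClosedFieldType.
Variable n : nat.
Implicit Types (A B : 'M[C]_n) (x : 'cV[C]_n).

Lemma psd_add A B : psd A -> psd B -> psd (A + B).
Proof.
move=> [hA pA] [hB pB]; split; first by rewrite conjtrD hA hB.
move=> x; rewrite mulmxDr mulmxDl mxE; exact: addr_ge0.
Qed.

Lemma qf_self_ge0 m (x : 'cV[C]_m) : 0 <= (conjtr x *m x) 0 0.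
Proof.
rewrite mxE; apply: sumr_ge0 => i _; rewrite /conjtr !mxE.
by rewrite mulrC -normCK exprn_ge0.
Qed.

Lemma psd_R1 (v : 'cV[C]_n) : psd (v *m conjtr v).
Proof.
split; first by rewrite conjtrM conjtrK.
move=> x; have e : conjtr v *m x = conjtr (conjtr x *m v) by rewrite conjtrM conjtrK.
rewrite mulmxA -mulmxA e mx11_mul conjtr11.
set s := (conjtr x *m v) 0 0.
by rewrite mxE eqxx mulr1n -normCK exprn_ge0.
Qed.

Lemma psd_scalar (t : C) : 0 <= t -> psd (t%:M : 'M[C]_n).
Proof.
move=> t0; split; first by rewrite conjtr_scalar; congr (_%:M); apply/CrealP; rewrite ger0_real.
move=> x; rewrite mul_mx_scalar -scalemxAl mxE.
by rewrite mulr_ge0 // qf_self_ge0.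
Qed.

Lemma det_herm_real A : conjtr A = A -> \det A \is Num.real.
Proof.
move=> hA; apply/CrealP.
rewrite -det_map_mx -det_tr.
by have := hA; rewrite /conjtr => ->.
Qed.

Lemma conjtr_delta (i : 'I_n) : conjtr (delta_mx i 0 : 'cV[C]_n) = delta_mx 0 i.
Proof. by apply/matrixP => j k; rewrite /conjtr !mxE rmorph_nat andbC. Qed.

Lemma psd_spectral A : psd A -> exists P : 'M[C]_n, exists s : 'rV[C]_n,
  [/\ conjtr P *m P = 1%:M, P *m conjtr P = 1%:M,
      A = conjtr P *m diag_mx s *m P & forall i, 0 <= s 0 i].
Proof.
move=> [hA pA].
have herm : A \is hermsymmx.
  apply/is_hermitianmxP; rewrite expr0 scale1r.
  by rewrite -[LHS]hA /conjtr map_trmx.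
have /orthomx_spectralP eA := hermitian_normalmx herm.
set P := spectralmx A in eA; set s := spectral_diag A in eA.
have Pu : P \is unitarymx by exact: spectral_unitarymx.
have ctE : conjtr P = invmx P by rewrite invmx_unitary // /conjtr map_trmx.
have Punit : P \in unitmx by exact: unitarymx_unit.
have h1 : conjtr P *m P = 1%:M by rewrite ctE mulVmx.
have h2 : P *m conjtr P = 1%:M by rewrite ctE mulmxV.
exists P, s; split => //; first by rewrite ctE.
move=> i; have := pA (conjtr P *m delta_mx i 0).
rewrite conjtrM conjtrK conjtr_delta eA -ctE.
have -> : (delta_mx 0 i : 'rV[C]_n) *m P *m (conjtr P *m diag_mx s *m P) *m (conjtr P *m (delta_mx i 0 : 'cV[C]_n))
   = (delta_mx 0 i : 'rV[C]_n) *m diag_mx s *m (delta_mx i 0 : 'cV[C]_n).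
  have k (M : 'M[C]_(1, n)) : M *m P *m conjtr P = M by rewrite -mulmxA h2 mulmx1.
  by rewrite !mulmxA !k.
by rewrite -rowE -colE !mxE eqxx mulr1n.
Qed.

Lemma psd_rank1_sum A : psd A -> exists v : 'I_n -> 'cV[C]_n,
  A = \sum_i v i *m conjtr (v i).
Proof.
move=> /psd_spectral [P [s [h1 h2 eA s0]]].
exists (fun i => sqrtC (s 0 i) *: (conjtr P *m delta_mx i 0)).
rewrite eA diag_mx_sum_delta mulmx_sumr mulmx_suml; apply: eq_bigr => i _.
rewrite conjtrZ conjtrM conjtrK conjtr_delta.
rewrite -[in RHS]scalemxAr -[in RHS]scalemxAl scalerA.
rewrite -[in LHS]scalemxAr -[in LHS]scalemxAl.
have -> : Num.conj (sqrtC (s 0 i)) * sqrtC (s 0 i) = s 0 i.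
  have /CrealP -> : sqrtC (s 0 i) \is Num.real by rewrite ger0_real // sqrtC_ge0.
  by rewrite -expr2 sqrtCK.
congr (_ *: _).
by rewrite !mulmxA -[conjtr P *m delta_mx i 0 *m delta_mx 0 i]mulmxA mul_delta_mx.
Qed.
End Psd.

Section R2.
Variable C : numClosedFieldType.
Variable n : nat.

Lemma cs_full (Q : 'M[C]_n) a b : psd Q ->
  qf Q a b * qf Q b a <= qf Q a a * qf Q b b.
Proof.
move=> pQ; have hQ := pQ.1.
have [bpos|] := boolP (0 < qf Q b b); first exact: cs_pos.
have [apos|] := boolP (0 < qf Q a a).
  by move=> _; rewrite mulrC [X in _ <= X]mulrC; exact: cs_pos.
rewrite !lt_def !psd_qf // !andbT !negbK => /eqP a0 /eqP b0.
rewrite a0 mul0r.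
set g := qf Q a b; set g' := qf Q b a.
have gc : Num.conj g' = g by rewrite /g' qfC // conjCK.
have ngc : Num.conj (- g') = - g by rewrite -gc; apply: rmorphN.
have := psd_qf (a - g' *: b) pQ.
rewrite !(qfDl, qfDr) -!scaleNr !(qfZl, qfZr) ngc a0 b0 -/g -/g' => H.
have H2 : 0 <= - (g * g') *+ 2.
  by apply: (le_trans H); rewrite le_eqVlt; apply/orP; left; apply/eqP; ring.
by move: H2; rewrite pmulrn_lge0 // oppr_ge0.
Qed.

Lemma rank2_pd (C0 : 'M[C]_n) (t : C) (a b : 'cV[C]_n) : psd C0 -> 0 < t ->
  0 <= \det (C0 + t%:M + a *m conjtr a + b *m conjtr b) - \det (C0 + t%:M + a *m conjtr a)
       - \det (C0 + t%:M + b *m conjtr b) + \det (C0 + t%:M).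
Proof.
move=> pC t0; set K := C0 + t%:M.
have [P [s [h1 h2 eC s0]]] := psd_spectral pC.
have pK : psd K := psd_add pC (@psd_scalar _ n t (ltW t0)).
have eK : K = conjtr P *m diag_mx (s + const_mx t) *m P.
  have -> : diag_mx (s + const_mx t) = diag_mx s + t%:M.
    by rewrite -diag_const_mx; apply/matrixP => i j; rewrite !mxE mulrnDl.
  by rewrite mulmxDr mulmxDl mul_mx_scalar -scalemxAl h1 scalemx1 -eC.
have dK : \det K = \prod_i (s 0 i + t).
  rewrite eK !det_mulmx det_diag mulrC mulrA -det_mulmx h2 det1 mul1r.
  by apply: eq_bigr => i _; rewrite !mxE.
have dKpos : 0 < \det K.
  by rewrite dK prodr_gt0 // => i _; rewrite ltr_wpDl.
have Ku : K \in unitmx by rewrite unitmxE unitfE gt_eqF.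
have hKi : conjtr (invmx K) = invmx K.
  by rewrite /conjtr map_invmx trmx_inv; congr invmx; exact: pK.1.
have pKi : psd (invmx K).
  split => // x; have := pK.2 (invmx K *m x).
  by rewrite conjtrM hKi !mulmxA -[conjtr x *m invmx K *m K]mulmxA mulVmx // mulmx1.
have a0 : 1 + (conjtr a *m invmx K *m a) 0 0 != 0.
  by rewrite gt_eqF // ltr_wpDr // (psd_qf a pKi).
rewrite (det_rank2 b (conjtr b) Ku a0).
apply: mulr_ge0; first exact: ltW.
by rewrite subr_ge0; apply: (cs_full a b pKi).
Qed.
End R2.

Lemma poly_cont0 (C : numClosedFieldType) (p : {poly C}) : exists2 M : C, 0 <= M &
  forall t : C, 0 <= t -> t <= 1 -> `|p.[t] - p.[0]| <= t * M.
Proof.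
elim/poly_ind: p => [|q c [M M0 HM]].
  by exists 0 => // t _ _; rewrite !horner0 subr0 normr0 mulr0.
exists (`|q.[0]| + M); first by rewrite addr_ge0.
move=> t t0 t1; rewrite !hornerMXaddC mulr0 add0r addrK.
rewrite normrM (ger0_norm t0) mulrC ler_wpM2l //.
have -> : q.[t] = q.[0] + (q.[t] - q.[0]) by rewrite addrC subrK.
apply: (le_trans (ler_normD _ _)); rewrite lerD2l.
apply: (le_trans (HM t t0 t1)).
by rewrite -[X in _ <= X]mul1r ler_wpM2r.
Qed.

Lemma perturb_ge0 (C : numClosedFieldType) (p : {poly C}) : p.[0] \is Num.real ->
  (forall t, 0 < t -> t <= 1 -> 0 <= p.[t]) -> 0 <= p.[0].
Proof.
move=> zr Hp; have [M M0 HM] := poly_cont0 p.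
have key t : 0 < t -> t <= 1 -> - (t * M) <= p.[0].
  move=> t0 t1; have := HM t (ltW t0) t1; have := Hp t t0 t1.
  move=> pt H.
  have h1 : p.[t] - p.[0] <= t * M.
    apply: le_trans H; apply: real_ler_norm; rewrite rpredB // ger0_real //.
  rewrite lerNl (le_trans _ h1) // addrC lerDl //.
have [//|zlt] := real_leP (real0 C) zr.
pose t := - p.[0] / (- p.[0] + M).
have nz0 : 0 < - p.[0] by rewrite oppr_gt0.
have den : 0 < - p.[0] + M by rewrite ltr_wpDr.
have t0 : 0 < t by rewrite divr_gt0.
have t1 : t <= 1 by rewrite ler_pdivrMr // mul1r lerDl.
have := key t t0 t1; rewrite lerNl.
have : t * M < - p.[0].
  rewrite /t mulrAC ltr_pdivrMr // ltr_pM2l // ltrDr //.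
move=> /lt_le_trans H /H; by rewrite ltxx.
Qed.

Lemma det_shift_poly (C : numClosedFieldType) n (A : 'M[C]_n) : exists p : {poly C},
  forall t, p.[t] = \det (t%:M + A).
Proof.
exists (char_poly (- A)) => t.
rewrite /char_poly -horner_evalE -det_map_mx /char_poly_mx.
congr (\det _); apply/matrixP => i j.
rewrite !mxE.
by rewrite rmorphB rmorphMn /= !horner_evalE hornerX hornerC opprK.
Qed.

Section Main.
Variable C : numClosedFieldType.
Variable n : nat.
Implicit Types (A B D : 'M[C]_n).

Definition Delta A B D := \det (A + B + D) + \det D - \det (A + D) - \det (B + D).

Lemma DeltaC A B D : Delta A B D = Delta B A D.
Proof. by rewrite /Delta [B + A]addrC; ring. Qed.

Lemma Delta_split A1 A2 B D :
  Delta (A1 + A2) B D = Delta A2 B (A1 + D) + Delta A1 B D.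
Proof.
rewrite /Delta.
have -> : A2 + B + (A1 + D) = A1 + A2 + B + D.
  by rewrite addrCA !addrA.
have -> : A2 + (A1 + D) = A1 + A2 + D by rewrite addrCA addrA.
have -> : B + (A1 + D) = A1 + B + D by rewrite addrCA addrA.
ring.
Qed.

Lemma Delta0 B D : Delta 0 B D = 0.
Proof. by rewrite /Delta !add0r; ring. Qed.

Definition R1 (v : 'cV[C]_n) := v *m conjtr v.

Lemma Delta_step (t : C) B :
  (forall C0 a, psd C0 -> 0 <= Delta (R1 a) B (C0 + t%:M)) ->
  forall (I : Type) (r : seq I) (v : I -> 'cV[C]_n) C0, psd C0 ->
  0 <= Delta (\sum_(i <- r) R1 (v i)) B (C0 + t%:M).
Proof.
move=> H I r v; elim: r => [|i r IH] C0 pC.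
  by rewrite big_nil Delta0.
rewrite big_cons Delta_split [R1 (v i) + (C0 + _)]addrA; apply: addr_ge0; last exact: H.
apply: IH; apply: psd_add => //; exact: psd_R1.
Qed.

Lemma Delta_rank2 (t : C) C0 a b : psd C0 -> 0 < t ->
  0 <= Delta (R1 a) (R1 b) (C0 + t%:M).
Proof.
move=> pC t0; have := rank2_pd a b pC t0.
rewrite /Delta /R1.
set K := C0 + t%:M.
have -> : a *m conjtr a + b *m conjtr b + K = K + a *m conjtr a + b *m conjtr b.
  by rewrite addrC addrA.
rewrite [a *m conjtr a + K]addrC [b *m conjtr b + K]addrC.
by move=> H; apply: (le_trans H); rewrite le_eqVlt; apply/orP; left; apply/eqP; ring.
Qed.

Lemma Delta_pd (t : C) A B D : psd A -> psd B -> psd D -> 0 < t ->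
  0 <= Delta A B (D + t%:M).
Proof.
move=> pA pB pD t0.
have [v ->] := psd_rank1_sum pA.
have [w ->] := psd_rank1_sum pB.
have L8a : forall C0 a, psd C0 -> 0 <= Delta (\sum_i R1 (w i)) (R1 a) (C0 + t%:M).
  move=> C0 a pC; apply: (Delta_step (B := R1 a)) => // C1 b pC1.
  exact: Delta_rank2.
apply: (Delta_step (B := \sum_i R1 (w i))) => // C0 a pC.
by rewrite DeltaC; apply: L8a.
Qed.
End Main.

Unset Implicit Arguments.

Theorem mainTheorem5 (C : numClosedFieldType) (n : nat) (A B D : 'M[C]_n) :
  psd A -> psd B -> psd D ->
  \det (A + D) + \det (B + D) <= \det (A + B + D) + \det D.
Proof.
move=> pA pB pD.
have [p1 e1] := det_shift_poly (A + B + D).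
have [p2 e2] := det_shift_poly D.
have [p3 e3] := det_shift_poly (A + D).
have [p4 e4] := det_shift_poly (B + D).
pose p := p1 + p2 - p3 - p4.
have ep t : p.[t] = Delta A B (D + t%:M).
  rewrite /p !hornerE e1 e2 e3 e4 /Delta.
  have sw (X Y : 'M[C]_n) : X + (Y + t%:M) = t%:M + (X + Y).
    by rewrite [Y + _]addrC addrCA.
  rewrite !sw.
  by rewrite [D + t%:M]addrC.
have z0 : (0 : C)%:M = 0 :> 'M[C]_n by apply/matrixP => i j; rewrite !mxE mul0rn.
have hp0 : p.[0] = \det (A + B + D) + \det D - \det (A + D) - \det (B + D).
  by rewrite ep /Delta z0 !addr0.
have herm M : psd M -> conjtr M = M by case.
have pAD := psd_add pA pD; have pBD := psd_add pB pD.
have pABD := psd_add (psd_add pA pB) pD.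
have preal : p.[0] \is Num.real.
  rewrite hp0; do ! apply: rpredB || apply: rpredD; apply: det_herm_real; exact: herm.
have Hp : forall t, 0 < t -> t <= 1 -> 0 <= p.[t].
  by move=> t t0 _; rewrite ep; exact: Delta_pd.
have := perturb_ge0 preal Hp.
rewrite hp0 => H; rewrite -subr_ge0; apply: (le_trans H).
by rewrite le_eqVlt; apply/orP; left; apply/eqP; ring.
Qed.
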